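(* Let $C\subset\mathbb{Z}_2^{l+r}$ be an even code (a subgroup with $|\alpha|\in2\mathbb{Z}$ for all $\alpha\in C$), and let $\varepsilon:C\times C\to\{\pm1\}$ be bimultiplicative with $\varepsilon(\alpha,\alpha)=(-1)^{|\alpha|/2}$ and $\varepsilon(\alpha,\beta)\varepsilon(\beta,\alpha)=(-1)^{|\alpha\beta|}$. Then the twisted group algebra $\mathbb{C}[\hat C]$ (basis $e_\alpha$, $e_\alpha e_\beta=\varepsilon(\alpha,\beta)e_{\alpha+\beta}$, $e_\alpha$ in degree $(0,\alpha)$, unit $e_0$) is a simple $(l,r)$-framed algebra whose structure codes are $D=\{0\}$ and $C$.
   Context: Let $\mathrm{IS}=\{0,\frac12,\frac1{16}\}$ with fusion rule $\star$ (values are subsets): $0\star h=h\star0=\{h\}$, $\frac12\star\frac12=\{0\}$, $\frac12\star\frac1{16}=\frac1{16}\star\frac12=\{\frac1{16}\}$, $\frac1{16}\star\frac1{16}=\{0,\frac12\}$; $A(h_0,h_1,h_2,h_3)=\{h: h\in h_2\star h_3,\ h_0\in h_1\star h\}$. For $h\in A(h_0,h_1,h_2,h_3)$, $h'\in A(h_0,h_2,h_1,h_3)$ define $B^{h,h'}_{h_0,h_1,h_2,h_3}$: $B_{*,0,*,*}=B_{*,*,0,*}=1$; $B_{*,\frac12,\frac12,*}=-1$; $B_{a,\frac12,\frac1{16},a'}=B_{a,\frac1{16},\frac12,a'}=i$ if $a$ or $a'$ is $\frac12$, else $-i$; $B^{b,b'}_{a,\frac1{16},\frac1{16},a'}=e^{-\pi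 i/8}\cdot\{1$ if $a,a'\ne\frac1{16},a=a'$; $i$ if $a,a'\neq\frac1{16},a\ne a'$; $\frac{1+i}2$ if $a=a'=\frac1{16},b=b'$; $\frac{1-i}2$ if $a=a'=\frac1{16},b\neq b'\}$. $\mathrm{IS}^{(l,r)}=\mathrm{IS}^l\times\mathrm{IS}^r$, $\lambda=(h_1,..,h_l,\bar h_1,..,\bar h_r)$, $s(\lambda)=\sum h_i-\sum\bar h_j$; $\star$, $A$ componentwise; $B^{\lambda,\lambda'}_{\lambda^0,\dots,\lambda^3}=\prod_{i\le l}B^{h_i,h'_i}_{h^0_i,\dots,h^3_i}\prod_{j\le r}\overline{B^{\bar h_j,\bar h'_j}_{\bar h^0_j,\dots,\bar h^3_j}}$. An $(l,r)$-framed algebra: finite-dimensional $\mathrm{IS}^{(l,r)}$-graded $S=\bigoplus S_\lambda$ over $\mathbb{C}$ with bilinear product, nonzero $1\in S_0$, $a\cdot_\lambda b$ the $S_\lambda$-component of $a\cdot b$, satisfying (FA1) $S_\lambda=0$ unless $s(\lambda)\in\mathbb{Z}$; (FA2) $S_0=\mathbb{C}1$, $1$ a two-sided unit; (FA3) $S_{\lambda^1}\cdot S_{\lambda^2}\subset\bigoplus_{\lambda\in\lambda^1\star\lambda^2}S_\lambda$; (FA4) $a_2\cdot_{\lambda^0}(a_1\cdot_{\lambda'}a_3)=\sum_{\lambda\in A(\lambda^0,\lambda^1,\lambda^2,\lambda^3)}B^{\lambda,\lambda'}_{\lambda^0,\lambda^1,\lambda^2,\lambda^3}a_1\cdot_{\lambda^0}(a_2\cdot_\lambda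 a_3)$ for $a_i\in S_{\lambda^i}$, $\lambda'\in A(\lambda^0,\lambda^2,\lambda^1,\lambda^3)$. Ideal: graded subspace $M$ with $S\cdot M\subset M$; simple: only ideals $0$ and $S$. Identify $\mathrm{IS}$ with $\{(d,c)\in\mathbb{Z}_2^2:dc=0\}$ via $0\leftrightarrow(0,0)$, $\frac12\leftrightarrow(0,1)$, $\frac1{16}\leftrightarrow(1,0)$, and componentwise $\mathrm{IS}^{(l,r)}$ with pairs $(d,c)\in(\mathbb{Z}_2^{l+r})^2$, $dc=0$. For $c\in\mathbb{Z}_2^{l+r}$, $|c|=|c|_l-|c|_r$ with $|c|_l,|c|_r$ the numbers of ones in the first $l$ and last $r$ coordinates; products of codewords are componentwise. Structure codes of $S$: $C_S=\{\alpha:S_{(0,\alpha)}\ne0\}$, $D_S=\{d:\bigoplus_cS_{(d,c)}\ne0\}$. *)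

(* Defs.v *)
From HB Require Import structures.
From mathcomp Require Import all_boot all_order all_algebra all_field.
From mathcomp Require Import complex Rstruct.
From Stdlib Require Rtrigo_def Rtrigo1.

Set Implicit Arguments.
Unset Strict Implicit.
Unset Printing Implicit Defensive.

Import Order.TTheory GRing.Theory Num.Theory.
Local Open Scope ring_scope.

Definition Cx : numClosedFieldType := Rdefinitions.R[i].

(* e^{-pi i/8} = cos(pi/8) - i sin(pi/8) *)
Definition zeta : Cx :=
  Complex (Rtrigo_def.cos (Rtrigo1.PI / 8%:R)) (- Rtrigo_def.sin (Rtrigo1.PI / 8%:R)).

(* The Ising fusion data IS = {0, 1/2, 1/16}.                           *)
Inductive IS := I0 | Ihalf | Isig.

Definition IS_to (h : IS) : 'I_3 :=
  match h with I0 => inord 0 | Ihalf => inord 1 | Isig => inord 2 end.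
Definition IS_of (i : 'I_3) : IS :=
  match val i with 0 => I0 | 1 => Ihalf | _ => Isig end.
Lemma IS_K : cancel IS_to IS_of.
Proof. by case; rewrite /IS_of /= inordK. Qed.
HB.instance Definition _ := Finite.copy IS (can_type IS_K).

Definition wIS (h : IS) : rat :=
  match h with I0 => 0 | Ihalf => 1 / 2%:R | Isig => 1 / 16%:R end.

Definition fusIS (a b h : IS) : bool :=
  match a, b with
  | I0, _ => h == b
  | _, I0 => h == a
  | Ihalf, Ihalf => h == I0
  | Ihalf, Isig | Isig, Ihalf => h == Isig
  | Isig, Isig => (h == I0) || (h == Ihalf)
  end.

Definition AIS (h0 h1 h2 h3 h : IS) : bool := fusIS h2 h3 h && fusIS h1 h h0.

(* B^{h,h'}_{h0,h1,h2,h3}  (value 0 on index combinations that never occur) *)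
Definition BIS (h h' h0 h1 h2 h3 : IS) : Cx :=
  if h1 == I0 then 1 else if h2 == I0 then 1 else
  match h1, h2 with
  | Ihalf, Ihalf => -1
  | Ihalf, Isig | Isig, Ihalf =>
      if (h0 == Ihalf) || (h3 == Ihalf) then 'i else - 'i
  | Isig, Isig =>
      zeta *
      (if (h0 != Isig) && (h3 != Isig) then
         (if h0 == h3 then 1 else 'i)
       else if (h0 == Isig) && (h3 == Isig) then
         (if h == h' then (1 + 'i) / 2%:R else (1 - 'i) / 2%:R)
       else 0)
  | _, _ => 1
  end.

(* Labels IS^(l,r): coordinates i < l are the "left" ones.             *)
Definition Lam (l r : nat) := {ffun 'I_(l + r) -> IS}.

Definition lam0 (l r : nat) : Lam l r := [ffun _ => I0].

Definition sLam (l r : nat) (la : Lam l r) : rat :=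
  \sum_(i : 'I_(l + r) | (i < l)%N) wIS (la i) - \sum_(i : 'I_(l + r) | ~~ (i < l)%N) wIS (la i).

Definition fusLam l r (la1 la2 la : Lam l r) : bool :=
  [forall i, fusIS (la1 i) (la2 i) (la i)].

Definition ALam l r (la0 la1 la2 la3 la : Lam l r) : bool :=
  [forall i, AIS (la0 i) (la1 i) (la2 i) (la3 i) (la i)].

Definition BLam l r (la la' la0 la1 la2 la3 : Lam l r) : Cx :=
  (\prod_(i : 'I_(l + r) | (i < l)%N) BIS (la i) (la' i) (la0 i) (la1 i) (la2 i) (la3 i)) *
  (\prod_(i : 'I_(l + r) | ~~ (i < l)%N)
      (BIS (la i) (la' i) (la0 i) (la1 i) (la2 i) (la3 i))^*).

(* S is a finite-dimensional C-vector space V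
   (a vectType), graded by a complete family of orthogonal projections
   pi la, with S_la = limg (pi la); a .{la} b = pi la (mul a b).       *)
Definition Scomp l r (V : vectType Cx) (pi : Lam l r -> 'End(V)) la : {vspace V} :=
  limg (pi la).

Definition is_framed_algebra l r (V : vectType Cx) (mul : V -> V -> V) (one : V)
    (pi : Lam l r -> 'End(V)) : Prop :=
  ((forall (k : Cx) a b c, mul (k *: a + b) c = k *: mul a c + mul b c) /\
      (forall (k : Cx) a b c, mul a (k *: b + c) = k *: mul a b + mul a c) /\
      (forall la v, pi la (pi la v) = pi la v) /\
      (forall la mu v, la != mu -> pi la (pi mu v) = 0) /\
      (forall v, \sum_(la : Lam l r) pi la v = v) /\
  (* FA1 *)
      (forall la, ~~ (sLam la \is a Num.int) -> Scomp pi la = 0%VS) /\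
  (* FA2 : nonzero 1 \in S_0, S_0 = C 1, 1 two-sided unit *)
      [/\ one != 0, Scomp pi (lam0 l r) = <[one]>%VS,
          (forall a, mul one a = a) & (forall a, mul a one = a)] /\
  (* FA3 *)
      (forall la1 la2 a b, a \in Scomp pi la1 -> b \in Scomp pi la2 ->
         mul a b \in (\sum_(la | fusLam la1 la2 la) Scomp pi la)%VS) /\
  (* FA4 *)
      (forall la0 la1 la2 la3 la' a1 a2 a3,
         a1 \in Scomp pi la1 -> a2 \in Scomp pi la2 -> a3 \in Scomp pi la3 ->
         ALam la0 la2 la1 la3 la' ->
         pi la0 (mul a2 (pi la' (mul a1 a3))) =
         \sum_(la | ALam la0 la1 la2 la3 la)
            BLam la la' la0 la1 la2 la3 *: pi la0 (mul a1 (pi la (mul a2 a3))))).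

Definition is_ideal l r (V : vectType Cx) (mul : V -> V -> V) (pi : Lam l r -> 'End(V))
    (M : {vspace V}) : Prop :=
  (forall la, (pi la @: M <= M)%VS) /\ (forall a m, m \in M -> mul a m \in M).

Definition is_simple l r (V : vectType Cx) (mul : V -> V -> V) (pi : Lam l r -> 'End(V)) : Prop :=
  forall M : {vspace V}, is_ideal mul pi M -> M = 0%VS \/ M = fullv.

Definition cw (l r : nat) := 'rV['F_2]_(l + r).

Definition cwmul l r (a b : cw l r) : cw l r := \row_i (a 0 i * b 0 i).

Definition cwt l r (c : cw l r) : int :=
  (#|[set i : 'I_(l + r) | (i < l)%N && (c 0 i != 0)]|)%:Z
  - (#|[set i : 'I_(l + r) | ~~ (i < l)%N && (c 0 i != 0)]|)%:Z.

(* identification (d,c) <-> label: 1/16 where d_i = 1, 1/2 where c_i = 1 *)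
Definition enc l r (d c : cw l r) : Lam l r :=
  [ffun i => if d 0 i != 0 then Isig else if c 0 i != 0 then Ihalf else I0].

Definition codeC l r (V : vectType Cx) (pi : Lam l r -> 'End(V)) : {set cw l r} :=
  [set al : cw l r | Scomp pi (enc 0 al) != 0%VS].

Definition codeD l r (V : vectType Cx) (pi : Lam l r -> 'End(V)) : {set cw l r} :=
  [set d : cw l r | [exists c : cw l r,
      (cwmul d c == 0) && (Scomp pi (enc d c) != 0%VS)]].

(* The twisted group algebra C[C^] : functions C -> Cx, e_al = delta_al. *)
Definition Csub l r (C : {set cw l r}) := {x : cw l r | x \in C}.

Definition TGA l r (C : {set cw l r}) : vectType Cx := {ffun Csub C -> Cx^o}.

Definition tga_mul l r (C : {set cw l r}) (eps : cw l r -> cw l r -> Cx)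
    (f g : TGA C) : TGA C :=
  [ffun ga : Csub C => \sum_(a : Csub C) \sum_(b : Csub C | val a + val b == val ga)
      eps (val a) (val b) * f a * g b].

Definition tga_one l r (C : {set cw l r}) : TGA C :=
  [ffun a : Csub C => if val a == 0 then 1 else 0].

Definition tga_pi l r (C : {set cw l r}) (la : Lam l r) : 'End(TGA C) :=
  linfun (fun f : TGA C =>
    [ffun a : Csub C => if enc 0 (val a) == la then f a else 0] : TGA C).

(* Main.v *)
Require Import Defs.
From HB Require Import structures.
From mathcomp Require Import all_boot all_order all_algebra all_field.
From mathcomp Require Import complex Rstruct.
From mathcomp Require Import ring.
Import Order.TTheory GRing.Theory Num.Theory.
Local Open Scope ring_scope.
Set Implicit Arguments.
Unset Strict Implicit.
Unset Printing Implicit Defensive.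

Lemma F2_eq (u v : 'F_2) : (u != 0) = (v != 0) -> u = v.
Proof. by move: u v; do 2!case=> [[|[|]] ?] //=; move=> _; apply/val_inj. Qed.
Lemma F2_add (u v : 'F_2) : (u + v != 0) = (u != 0) (+) (v != 0).
Proof. by move: u v; do 2!case=> [[|[|]] ?] //=. Qed.
Lemma F2_mul (u v : 'F_2) : (u * v != 0) = (u != 0) && (v != 0).
Proof. by rewrite mulf_eq0 negb_or. Qed.
Lemma F2_double (u : 'F_2) : u + u = 0.
Proof. by move: u; case=> [[|[|]] ?] //=; apply/val_inj. Qed.

Definition hb (p : bool) : IS := if p then Ihalf else I0.

Definition eqIS (a b : IS) : bool :=
  match a, b with I0, I0 | Ihalf, Ihalf | Isig, Isig => true | _, _ => false end.
Lemma eqISE (a b : IS) : (a == b) = eqIS a b.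
Proof. by case: a; case: b => /=; try exact: eqxx; apply/eqP. Qed.

Lemma fus_hb p q h : fusIS (hb p) (hb q) h = (h == hb (p (+) q)).
Proof. by case: p; case: q; case: h; rewrite /= !eqISE. Qed.

Lemma BIS_hb h h' h0 p q h3 : BIS h h' h0 (hb p) (hb q) h3 = if p && q then -1 else 1.
Proof. by case: p; case: q; rewrite /BIS /= !eqISE. Qed.

Lemma sum_if (R : nmodType) (I : finType) (P Q : pred I) (c : R) :
  \sum_(i | P i) (if Q i then c else 0) = c *+ #|[set i | P i && Q i]|.
Proof. by rewrite -big_mkcondr -sumr_const; apply: eq_bigl => i; rewrite inE. Qed.

Lemma prod_if (R : comPzRingType) (I : finType) (P Q : pred I) (c : R) :
  \prod_(i | P i) (if Q i then c else 1) = c ^+ #|[set i | P i && Q i]|.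
Proof. by rewrite -big_mkcondr -prodr_const; apply: eq_bigl => i; rewrite inE. Qed.

Lemma signz (a b : nat) : (-1 : Cx) ^ (a%:Z - b%:Z) = (-1) ^+ a * (-1) ^+ b.
Proof.
rewrite expfzDr ?oppr_eq0 ?oner_eq0 // -exprnN invr_sign //.
Qed.
Lemma conj_if (b : bool) : ((if b then -1 else 1 : Cx))^* = if b then -1 else 1.
Proof. by case: b; rewrite ?conjCN1 ?conjC1. Qed.
Section S.
Variables (l r : nat).
Implicit Types x y z : cw l r.

Lemma encE x i : enc 0 x i = hb (x 0 i != 0).
Proof. by rewrite ffunE mxE eqxx. Qed.

Lemma enc_inj x y : enc 0 x = enc 0 y -> x = y.
Proof.
move=> E; apply/rowP => i; apply: F2_eq.
have := congr1 (fun f : Lam l r => f i) E; rewrite !encE /hb.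
by case: (x 0 i != 0); case: (y 0 i != 0).
Qed.

Lemma encD x y i : enc 0 (x + y) i = hb ((x 0 i != 0) (+) (y 0 i != 0)).
Proof. by rewrite encE mxE F2_add. Qed.

Lemma ALam_force x1 x2 x3 (la' : Lam l r) :
  ALam (enc 0 (x1 + x2 + x3)) (enc 0 x2) (enc 0 x1) (enc 0 x3) la' -> la' = enc 0 (x1 + x3).
Proof.
move/forallP => H; apply/ffunP => i; have /andP [h _] := H i.
by move: h; rewrite !encE fus_hb => /eqP ->; rewrite mxE F2_add.
Qed.

Lemma ALam_ok x1 x2 x3 :
  ALam (enc 0 (x1 + x2 + x3)) (enc 0 x1) (enc 0 x2) (enc 0 x3) (enc 0 (x2 + x3)).
Proof.
apply/forallP => i; rewrite /AIS !encD !encE !mxE !F2_add !fus_hb.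
by rewrite addbA !eqxx.
Qed.

Lemma BLam_val x1 x2 (la la' la0 la3 : Lam l r) :
  BLam la la' la0 (enc 0 x1) (enc 0 x2) la3 = (-1) ^ cwt (cwmul x1 x2).
Proof.
rewrite /BLam.
under eq_bigr do rewrite !encE BIS_hb.
under [X in _ * X]eq_bigr do rewrite !encE BIS_hb conj_if.
rewrite !prod_if /cwt signz; congr (_ * _); congr (_ ^+ _); apply: eq_card => i;
  by rewrite !inE mxE F2_mul.
Qed.


Lemma fus_ok x y : fusLam (enc 0 x) (enc 0 y) (enc 0 (x + y)).
Proof. by apply/forallP => i; rewrite encD !encE fus_hb eqxx. Qed.

Lemma lam0E : lam0 l r = enc 0 0.
Proof. by apply/ffunP => i; rewrite encE mxE eqxx ffunE. Qed.

Lemma cw_double x : x + x = 0.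
Proof. by apply/rowP => i; rewrite !mxE F2_double. Qed.

Lemma wIS_hb p : wIS (hb p) = if p then 1 / 2%:R else 0.
Proof. by case: p. Qed.

Lemma sLam_int x : (2 %| cwt x)%Z -> sLam (enc 0 x) \is a Num.int.
Proof.
move=> H; have := Qint_dvdz H; congr (_ \is a _).
rewrite /sLam.
under eq_bigr do rewrite encE wIS_hb.
under [X in _ - X]eq_bigr do rewrite encE wIS_hb.
rewrite !sum_if /cwt rmorphB /= -!pmulrn.
by field.
Qed.
End S.

Section T.
Variables (l r : nat) (C : {set cw l r}).

Definition pif (la : Lam l r) (f : TGA C) : TGA C :=
  [ffun a : Csub C => if enc 0 (val a) == la then f a else 0].

Lemma pif_lin la : linear (pif la).
Proof.
move=> k f g; apply/ffunP => a; rewrite !ffunE.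
by case: ifP => _; rewrite ?scaler0 ?addr0.
Qed.

HB.instance Definition _ la := GRing.isLinear.Build Cx (TGA C) (TGA C) _ (pif la) (pif_lin la).

Lemma piE la f : tga_pi C la f = pif la f.
Proof. exact: (lfunE (pif la)). Qed.

Lemma piEa la f a : tga_pi C la f a = if enc 0 (val a) == la then f a else 0.
Proof. by rewrite piE ffunE. Qed.


Lemma piZs la (k : Cx) (f : TGA C) : tga_pi C la (k *: f) = k *: tga_pi C la f.
Proof. by apply/ffunP => a; rewrite !piEa !ffunE piEa; case: (_ == la); rewrite ?scaler0. Qed.
Lemma pi0 la : tga_pi C la (0 : TGA C) = 0.
Proof. by have := piZs la 0 0; rewrite !scale0r. Qed.

Definition ee (x : cw l r) : TGA C := [ffun a : Csub C => if val a == x then 1 else 0].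

Lemma pi_e la x : tga_pi C la (ee x) = if enc 0 x == la then ee x else 0.
Proof.
apply/ffunP => a; rewrite piEa; case: (eqVneq (val a) x) => [->|ne].
  by case: ifP => _; rewrite ?ffunE.
by case: ifP => _; case: ifP => _; rewrite !ffunE ?(negbTE ne).
Qed.

Variable eps : cw l r -> cw l r -> Cx.
Hypothesis H0 : 0 \in C.
Hypothesis Hadd : forall a b, a \in C -> b \in C -> a + b \in C.
Hypothesis Heven : forall a, a \in C -> (2 %| cwt a)%Z.
Hypothesis Hpm : forall a b, a \in C -> b \in C -> eps a b = 1 \/ eps a b = -1.
Hypothesis Hl : forall a b c, a \in C -> b \in C -> c \in C -> eps (a + b) c = eps a c * eps b c.
Hypothesis Hr : forall a b c, a \in C -> b \in C -> c \in C -> eps a (b + c) = eps a b * eps a c.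
Hypothesis Hcomm : forall a b, a \in C -> b \in C -> eps a b * eps b a = (-1) ^ cwt (cwmul a b).

Lemma mulDl (k : Cx) (a b c : TGA C) :
  tga_mul eps (k *: a + b) c = k *: tga_mul eps a c + tga_mul eps b c.
Proof.
apply/ffunP => g; rewrite !ffunE.
rewrite scaler_sumr -big_split; apply: eq_bigr => i _.
rewrite scaler_sumr -big_split; apply: eq_bigr => j _.
rewrite !ffunE /GRing.scale /=; ring.
Qed.

Lemma mulDr (k : Cx) (a b c : TGA C) :
  tga_mul eps a (k *: b + c) = k *: tga_mul eps a b + tga_mul eps a c.
Proof.
apply/ffunP => g; rewrite !ffunE.
rewrite scaler_sumr -big_split; apply: eq_bigr => i _.
rewrite scaler_sumr -big_split; apply: eq_bigr => j _.
rewrite !ffunE /GRing.scale /=; ring.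
Qed.

Lemma mulZl (k : Cx) (a c : TGA C) : tga_mul eps (k *: a) c = k *: tga_mul eps a c.
Proof.
apply/ffunP => g; rewrite !ffunE scaler_sumr; apply: eq_bigr => i _.
rewrite scaler_sumr; apply: eq_bigr => j _.
rewrite !ffunE /GRing.scale /=; ring.
Qed.

Lemma mulZr (k : Cx) (a c : TGA C) : tga_mul eps a (k *: c) = k *: tga_mul eps a c.
Proof.
apply/ffunP => g; rewrite !ffunE scaler_sumr; apply: eq_bigr => i _.
rewrite scaler_sumr; apply: eq_bigr => j _.
rewrite !ffunE /GRing.scale /=; ring.
Qed.

Lemma tmul0l (c : TGA C) : tga_mul eps 0 c = 0.
Proof. by have := mulZl 0 0 c; rewrite !scale0r. Qed.
Lemma tmul0r (c : TGA C) : tga_mul eps c 0 = 0.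
Proof. by have := mulZr 0 c 0; rewrite !scale0r. Qed.



Lemma val_ne (i : Csub C) x (Hx : x \in C) : i != exist _ x Hx -> val i != x.
Proof. by apply: contraNneq => E; apply/eqP/val_inj. Qed.

Lemma mul_e x y (Hx : x \in C) (Hy : y \in C) :
  tga_mul eps (ee x) (ee y) = eps x y *: ee (x + y).
Proof.
apply/ffunP => g; rewrite !ffunE.
rewrite (bigD1 (exist _ x Hx : Csub C)) //= [X in _ + X]big1 ?addr0; last first.
  move=> i ne; have {}ne := val_ne ne; apply: big1 => j _; rewrite !ffunE (negbTE ne).
  by rewrite mulr0 mul0r.
rewrite big_mkcond (bigD1 (exist _ y Hy : Csub C)) //= [X in _ + X]big1 ?addr0; last first.
  move=> j ne; have {}ne := val_ne ne; rewrite !ffunE (negbTE ne) mulr0.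
  by case: ifP.
rewrite !ffunE /= !eqxx eq_sym.
by case: ifP => _; rewrite /GRing.scale /= ?mulr1 ?mulr0.
Qed.

Lemma pi_idem la (v : TGA C) : tga_pi C la (tga_pi C la v) = tga_pi C la v.
Proof. by apply/ffunP => a; rewrite !piE /pif !ffunE; case: (enc 0 (val a) == la). Qed.

Lemma memS la (v : TGA C) : (v \in Scomp (tga_pi C) la) = (tga_pi C la v == v).
Proof.
apply/idP/eqP => [/memv_imgP [w _ ->]|<-]; first exact: pi_idem.
exact: memv_img (memvf v).
Qed.

Lemma hom la (v : TGA C) : v \in Scomp (tga_pi C) la ->
  exists x k, [/\ x \in C, v = k *: ee x & (k != 0 -> enc 0 x = la)].
Proof.
rewrite memS => /eqP Ev.
case: (pickP (fun b : Csub C => enc 0 (val b) == la)) => [b /eqP Eb | none].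
  exists (val b), (v b); split => //; first exact: valP.
  apply/ffunP => a; rewrite ffunE /GRing.scale /= ffunE.
  case: (eqVneq a b) => [->|ne]; first by rewrite eqxx mulr1.
  have nv : val a != val b by [].
  rewrite (negbTE nv) mulr0 -Ev piEa.
  case: eqP => // Ea; case/eqP: nv; apply: enc_inj; by rewrite Ea.
exists 0, 0; split => //; last by rewrite eqxx.
rewrite scale0r; apply/ffunP => a; rewrite -Ev piEa none ffunE; done.
Qed.

Lemma N1_neq1 : (-1 : Cx) != 1.
Proof. by rewrite eq_sym -subr_eq0 opprK (pnatr_eq0 Cx 2). Qed.

Lemma eps_nz a b : a \in C -> b \in C -> eps a b != 0.
Proof. by move=> Ha Hb; case: (Hpm Ha Hb) => ->; rewrite ?oppr_eq0 oner_eq0. Qed.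

Lemma eps_sq a b : a \in C -> b \in C -> eps a b * eps a b = 1.
Proof. by move=> Ha Hb; case: (Hpm Ha Hb) => ->; rewrite ?mulrNN mulr1. Qed.

Lemma eps0l c : c \in C -> eps 0 c = 1.
Proof.
move=> Hc; have := Hl H0 H0 Hc; rewrite addr0.
case: (Hpm H0 Hc) => -> //; rewrite mulrNN mulr1 => /eqP; by rewrite (negbTE N1_neq1).
Qed.

Lemma eps0r c : c \in C -> eps c 0 = 1.
Proof.
move=> Hc; have := Hr Hc H0 H0; rewrite addr0.
case: (Hpm Hc H0) => -> //; rewrite mulrNN mulr1 => /eqP; by rewrite (negbTE N1_neq1).
Qed.

Lemma addr_eqself (a b : cw l r) : (a + b == a) = (b == 0).
Proof. by rewrite -{2}[a]addr0 (inj_eq (addrI a)). Qed.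

Lemma mul1f f : tga_mul eps (tga_one C) f = f.
Proof.
apply/ffunP => g; rewrite ffunE (bigD1 (exist _ 0 H0 : Csub C)) //= [X in _ + X]big1 ?addr0; last first.
  move=> i ne; have {}ne := val_ne ne; apply: big1 => j _.
  by rewrite ffunE (negbTE ne) mulr0 mul0r.
rewrite (eq_bigl (fun j => j == g)); last by move=> j; rewrite add0r.
by rewrite big_pred1_eq ffunE /= eqxx mulr1 eps0l ?mul1r //; exact: valP.
Qed.

Lemma mulf1 f : tga_mul eps f (tga_one C) = f.
Proof.
apply/ffunP => g; rewrite ffunE (bigD1 g) //= [X in _ + X]big1 ?addr0; last first.
  move=> i ne; apply: big1 => j /eqP E; rewrite ffunE; case: eqP => [E0|]; last by rewrite mulr0.
  by case/eqP: ne; apply/val_inj => /=; rewrite -E E0 addr0.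
rewrite (eq_bigl (fun j => j == (exist _ 0 H0 : Csub C))); last by move=> j; rewrite addr_eqself.
by rewrite big_pred1_eq ffunE /= eqxx mulr1 eps0r ?mul1r //; exact: valP.
Qed.

Lemma piZ la : (forall b : Csub C, enc 0 (val b) != la) -> Scomp (tga_pi C) la = 0%VS.
Proof.
move=> H; apply/eqP; rewrite -subv0; apply/subvP => v; rewrite memS => /eqP <-.
have -> : tga_pi C la v = 0 by apply/ffunP => a; rewrite piEa ffunE (negbTE (H a)).
exact: mem0v.
Qed.

Lemma ee_mem x : ee x \in Scomp (tga_pi C) (enc 0 x).
Proof. by rewrite memS pi_e eqxx. Qed.

Lemma ee_nz x (Hx : x \in C) : ee x != 0.
Proof.
apply/eqP => /ffunP /(_ (exist _ x Hx)); rewrite !ffunE /= eqxx => /eqP.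
by rewrite oner_eq0.
Qed.

Lemma NF x y z la la0 (a b c : Cx) : x \in C -> y \in C -> z \in C ->
 tga_pi C la0 (tga_mul eps (a *: ee x) (tga_pi C la (tga_mul eps (b *: ee y) (c *: ee z)))) =
 (a * b * c * (if enc 0 (y + z) == la then
     if enc 0 (x + (y + z)) == la0 then eps y z * eps x (y + z) else 0 else 0)) *: ee (x + (y + z)).
Proof.
move=> Hx Hy Hz.
rewrite !mulZl !mulZr (mul_e Hy Hz) !piZs pi_e.
case: eqP => _; last by rewrite !scaler0 tmul0r pi0 !scaler0 mulr0 scale0r.
rewrite !mulZr (mul_e Hx (Hadd Hy Hz)) !piZs pi_e.
case: eqP => _; last by rewrite !scaler0 mulr0 scale0r.
by rewrite !scalerA; congr (_ *: _); ring.
Qed.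

Lemma NF' x y z v w la la0 (a b c : Cx) : x \in C -> y \in C -> z \in C ->
 v = y + z -> w = x + v ->
 tga_pi C la0 (tga_mul eps (a *: ee x) (tga_pi C la (tga_mul eps (b *: ee y) (c *: ee z)))) =
 (a * b * c * (if enc 0 v == la then
     if enc 0 w == la0 then eps y z * eps x v else 0 else 0)) *: ee w.
Proof. by move=> Hx Hy Hz -> ->; exact: NF. Qed.

Lemma FA4 la0 la1 la2 la3 la' (a1 a2 a3 : TGA C) :
  a1 \in Scomp (tga_pi C) la1 -> a2 \in Scomp (tga_pi C) la2 -> a3 \in Scomp (tga_pi C) la3 ->
  ALam la0 la2 la1 la3 la' ->
  tga_pi C la0 (tga_mul eps a2 (tga_pi C la' (tga_mul eps a1 a3))) =
  \sum_(la | ALam la0 la1 la2 la3 la)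
     BLam la la' la0 la1 la2 la3 *: tga_pi C la0 (tga_mul eps a1 (tga_pi C la (tga_mul eps a2 a3))).
Proof.
move=> /hom [x1 [k1 [Hx1 -> E1]]] /hom [x2 [k2 [Hx2 -> E2]]] /hom [x3 [k3 [Hx3 -> E3]]] HA.
have Es : x1 + (x2 + x3) = x2 + (x1 + x3) by rewrite addrCA.
rewrite [LHS](@NF' x2 x1 x3 (x1 + x3) (x1 + (x2 + x3)) la' la0 k2 k1 k3 Hx2 Hx1 Hx3 erefl Es).
under eq_bigr => la _ do rewrite (@NF' x1 x2 x3 (x2 + x3) (x1 + (x2 + x3)) la la0 k1 k2 k3 Hx1 Hx2 Hx3 erefl erefl).
under eq_bigr do rewrite scalerA.
rewrite -scaler_suml; congr (_ *: _).
rewrite [k2 * k1]mulrC.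
have [->|n1] := eqVneq k1 0.
  by rewrite !(mul0r, mulr0) big1 // => la _; rewrite !(mul0r, mulr0).
have [->|n2] := eqVneq k2 0.
  by rewrite !(mul0r, mulr0) big1 // => la _; rewrite !(mul0r, mulr0).
have [->|n3] := eqVneq k3 0.
  by rewrite !(mul0r, mulr0) big1 // => la _; rewrite !(mul0r, mulr0).
rewrite -(E1 n1) -(E2 n2) -(E3 n3) in HA *.
have [E0|N0] := eqVneq (enc 0 (x1 + (x2 + x3))) la0; last first.
  rewrite if_same mulr0 big1 // => la _.
  by rewrite if_same !mulr0.
rewrite -E0 in HA *; rewrite addrA in HA.
rewrite (ALam_force HA) !eqxx.
rewrite (bigD1 (enc 0 (x2 + x3))) /=; last by rewrite addrA; exact: ALam_ok.
rewrite [X in _ = _ + X]big1 ?addr0; last first.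
  by move=> la /andP [_ ne]; rewrite eq_sym (negbTE ne) !mulr0.
rewrite !eqxx BLam_val (Hr Hx2 Hx1 Hx3) (Hr Hx1 Hx2 Hx3) -(Hcomm Hx1 Hx2).
have e := eps_sq Hx1 Hx2.
rewrite -[LHS]mulr1 -[X in _ * X = _]e; ring.
Qed. 
Lemma pi_orth la mu (v : TGA C) : la != mu -> tga_pi C la (tga_pi C mu v) = 0.
Proof.
move=> ne; apply/ffunP => a; rewrite !piE /pif !ffunE.
case: (eqVneq (enc 0 (val a)) la) => // E.
by rewrite -E in ne; rewrite (negbTE ne).
Qed.

Lemma pi_sum (v : TGA C) : \sum_(la : Lam l r) tga_pi C la v = v.
Proof.
apply/ffunP => a; rewrite sum_ffunE (bigD1 (enc 0 (val a))) //= piEa eqxx.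
rewrite big1 ?addr0 // => la ne; rewrite piEa eq_sym (negbTE ne); done.
Qed.

Lemma FA1 la : ~~ (sLam la \is a Num.int) -> Scomp (tga_pi C) la = 0%VS.
Proof.
move=> nI; apply: piZ => b; apply: contraNneq nI => <-.
apply: sLam_int; apply: Heven; exact: valP.
Qed.

Lemma one_ee : tga_one C = ee 0.
Proof. by []. Qed.

Lemma FA2 : Scomp (tga_pi C) (lam0 l r) = <[tga_one C]>%VS.
Proof.
rewrite lam0E one_ee; apply/eqP; rewrite eqEsubv; apply/andP; split; last first.
  by rewrite -memvE; exact: ee_mem.
apply/subvP => v /hom [x [k [Hx -> E]]].
have [->|nk] := eqVneq k 0; first by rewrite scale0r mem0v.
by rewrite (enc_inj (E nk)); apply: memvZ; exact: memv_line.
Qed.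

Lemma FA3 la1 la2 (a b : TGA C) : a \in Scomp (tga_pi C) la1 -> b \in Scomp (tga_pi C) la2 ->
  tga_mul eps a b \in (\sum_(la | fusLam la1 la2 la) Scomp (tga_pi C) la)%VS.
Proof.
move=> /hom [x [k [Hx -> E]]] /hom [y [k' [Hy -> E']]].
have [->|nk] := eqVneq k 0; first by rewrite scale0r tmul0l mem0v.
have [->|nk'] := eqVneq k' 0; first by rewrite scale0r tmul0r mem0v.
rewrite mulZl mulZr (mul_e Hx Hy); do 3!apply: memvZ.
rewrite memvE; apply: (sumv_sup (enc 0 (x + y))).
  by rewrite -(E nk) -(E' nk'); exact: fus_ok.
by rewrite -memvE; exact: ee_mem.
Qed.

Lemma simple : is_simple (tga_mul eps) (tga_pi C).
Proof.
move=> M [HM1 HM2].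
have [->|nz] := eqVneq M 0%VS; [by left | right].
have vM := memv_pick M; set v := vpick M in vM.
have nv : v != 0 by rewrite vpick0.
have [b vb] : exists b, v b != 0.
  case: (pickP (fun b => v b != 0)) => [b vb | all0]; first by exists b.
  case/eqP: nv; apply/ffunP => b; have := all0 b; rewrite ffunE => /negbFE/eqP.
  done.
set la := enc 0 (val b).
have pM : tga_pi C la v \in M by apply: (subvP (HM1 la)); exact: memv_img.
have pS : tga_pi C la v \in Scomp (tga_pi C) la by rewrite memS pi_idem.
have [x [k [Hx Ek _]]] := hom pS.
have nk : k != 0.
  apply: contraNneq vb => k0; move/(congr1 (fun f : TGA C => f b)): Ek.
  by rewrite piE /pif ffunE eqxx k0 scale0r ffunE => ->.
have eM : ee x \in M.
  by rewrite -[ee x]scale1r -(mulVf nk) -scalerA -Ek; apply: memvZ.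
have oM : ee 0 \in M.
  have := HM2 (ee x) _ eM; rewrite (mul_e Hx Hx) cw_double => /(memvZ (eps x x)^-1).
  by rewrite scalerA mulVf ?scale1r // eps_nz.
apply/eqP; rewrite eqEsubv subvf /=; apply/subvP => f _.
by rewrite -(mulf1 f) one_ee; apply: HM2.
Qed.

Lemma Snz x : x \in C -> Scomp (tga_pi C) (enc 0 x) != 0%VS.
Proof.
move=> Hx; apply/eqP => E; have := ee_mem x; rewrite E memv0.
by rewrite (negbTE (ee_nz Hx)).
Qed.

Lemma codeCE : codeC (tga_pi C) = C.
Proof.
apply/setP => x; rewrite inE; case: (boolP (x \in C)) => Hx; first exact: Snz.
rewrite piZ ?eqxx // => b; apply/eqP => /enc_inj E; case/negP: Hx; rewrite -E.
exact: valP.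
Qed.

Lemma codeDE : codeD (tga_pi C) = [set 0].
Proof.
apply/setP => d; rewrite !inE; apply/existsP/eqP => [[c /andP [_ nz]] | ->].
  case: (pickP (fun b : Csub C => enc 0 (val b) == enc d c)) => [b /eqP Eb | none];
    last by rewrite piZ ?eqxx in nz => // b; rewrite none.
  apply/rowP => i; rewrite mxE; apply/eqP; apply: contraT => di.
  have := congr1 (fun f : Lam l r => f i) Eb; rewrite encE ffunE di /hb.
  by case: (_ != 0).
exists 0; rewrite Snz // andbT; apply/eqP/rowP => i; by rewrite !mxE mulr0.
Qed.

Lemma main_sec : [/\ is_framed_algebra (tga_mul eps) (tga_one C) (@tga_pi l r C),
      is_simple (tga_mul eps) (@tga_pi l r C),
      codeD (@tga_pi l r C) = [set 0] &
      codeC (@tga_pi l r C) = C].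
Proof.
split; [|exact: simple|exact: codeDE|exact: codeCE].
split; first exact: mulDl.
split; first exact: mulDr.
split; first exact: pi_idem.
split; first exact: pi_orth.
split; first exact: pi_sum.
split; first exact: FA1.
split; first by split; [rewrite one_ee ee_nz | exact: FA2 | exact: mul1f | exact: mulf1].
split; first exact: FA3.
exact: FA4.
Qed.
End T.

Theorem mainTheorem10 (l r : nat) (C : {set cw l r}) (eps : cw l r -> cw l r -> Cx) :
  (* C is an even code *)
  0 \in C ->
  (forall a b, a \in C -> b \in C -> a + b \in C) ->
  (forall a, a \in C -> (2 %| cwt a)%Z) ->
  (* eps : C x C -> {+1,-1} bimultiplicative *)
  (forall a b, a \in C -> b \in C -> eps a b = 1 \/ eps a b = -1) ->
  (forall a b c, a \in C -> b \in C -> c \in C -> eps (a + b) c = eps a c * eps b c) ->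
  (forall a b c, a \in C -> b \in C -> c \in C -> eps a (b + c) = eps a b * eps a c) ->
  (forall a, a \in C -> eps a a = (-1) ^ (cwt a %/ 2)%Z) ->
  (forall a b, a \in C -> b \in C -> eps a b * eps b a = (-1) ^ cwt (cwmul a b)) ->
  [/\ is_framed_algebra (tga_mul eps) (tga_one C) (@tga_pi l r C),
      is_simple (tga_mul eps) (@tga_pi l r C),
      codeD (@tga_pi l r C) = [set 0] &
      codeC (@tga_pi l r C) = C].
Proof. by move=> H0 Hadd Heven Hpm Hl Hr _ Hcomm; apply: main_sec. Qed.
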